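(* Let $0<r_1<r_2<r_3$ satisfy \[ r_2(r_3-r_1)^3 - r_1(r_3+r_2)^3 - r_3(r_1+r_2)^3 \ \ge\ 0 . \] Then for every $\theta\in[0,\pi]$ we have $g_{13}(\theta)\le g_{12}(\theta)$ and $g_{13}(\theta)\le g_{23}(\theta)$.
   Context: For $i,j\in\{1,2,3\}$ and $\theta\in\mathbb R$ set $D_{ij}(\theta)=r_i^2+r_j^2-2r_ir_j\cos\theta$ and $g_{ij}(\theta)=\dfrac{r_ir_j\sin\theta}{D_{ij}(\theta)^{3/2}}$. *)

(* Defs.v *)
From Stdlib Require Import Reals.
Open Scope R_scope.

Definition Dij (ri rj theta : R) : R := ri^2 + rj^2 - 2*ri*rj*cos theta.

(* g_ij(theta) = ri rj sin theta / D_ij(theta)^(3/2);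
   D^(3/2) is written (sqrt D)^3, which equals D^(3/2) for D >= 0
   (D_ij >= (ri - rj)^2 >= 0 always). *)
Definition gij (ri rj theta : R) : R :=
  ri * rj * sin theta / (sqrt (Dij ri rj theta))^3.

(* Main.v *)
Require Import Defs.
From Stdlib Require Import Reals Lra Psatz.
Open Scope R_scope.

Lemma div_mono (x y K : R) : 0 < x <= y -> 0 <= K -> K / y^3 <= K / x^3.
Proof.
  intros [Hx Hxy] HK. unfold Rdiv. apply Rmult_le_compat_l; auto.
  apply Rinv_le_contravar. apply pow_lt; lra. apply pow_incr; lra.
Qed.

Lemma cross (x y A B : R) : 0 < A -> 0 < B -> x * B <= y * A -> x / A <= y / B.
Proof.
  intros HA HB H. apply (Rmult_le_reg_r (A*B)). nra.
  replace (x / A * (A * B)) with (x * B) by (field; lra).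
  replace (y / B * (A * B)) with (y * A) by (field; lra). exact H.
Qed.

Lemma sqrt_ge (D a : R) : 0 <= a -> a^2 <= D -> a <= sqrt D.
Proof.
  intros Ha H. rewrite <- (sqrt_pow2 a Ha). apply sqrt_le_1_alt. exact H.
Qed.

Lemma sqrt_le (D a : R) : 0 <= a -> 0 <= D -> D <= a^2 -> sqrt D <= a.
Proof.
  intros Ha HD H. rewrite <- (sqrt_pow2 a Ha). apply sqrt_le_1_alt. exact H.
Qed.

Lemma step (ri rj rk rl th : R) :
  0 < ri -> ri < rj -> 0 < rk -> rk < rl ->
  ri * rj * (rk + rl)^3 <= rk * rl * (rj - ri)^3 ->
  0 <= th <= PI ->
  gij ri rj th <= gij rk rl th.
Proof.
  intros H1 H2 H3 H4 Hc Hth.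
  pose proof (sin_ge_0 th ltac:(lra) ltac:(lra)) as Hs.
  pose proof (COS_bound th) as [Hc1 Hc2].
  unfold gij.
  assert (Pi : 0 < ri * rj) by nra.
  assert (Pk : 0 < rk * rl) by nra.
  assert (Q1 : 0 <= ri * rj * (1 - cos th)) by (apply Rmult_le_pos; lra).
  assert (Q2 : 0 <= rk * rl * (1 + cos th)) by (apply Rmult_le_pos; lra).
  assert (Q3 : 0 <= rk * rl * (1 - cos th)) by (apply Rmult_le_pos; lra).
  assert (D1 : (rj - ri)^2 <= Dij ri rj th) by (unfold Dij; nra).
  assert (D2 : Dij rk rl th <= (rk + rl)^2) by (unfold Dij; nra).
  assert (D3 : 0 < Dij rk rl th) by (unfold Dij; nra).
  assert (S : 0 <= sin th) by lra.
  assert (E1 : ri * rj * sin th / (sqrt (Dij ri rj th))^3 <= ri * rj * sin th / (rj - ri)^3).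
  { apply div_mono. split. lra. apply sqrt_ge. lra. exact D1.
    apply Rmult_le_pos; lra. }
  assert (E2 : rk * rl * sin th / (rk + rl)^3 <= rk * rl * sin th / (sqrt (Dij rk rl th))^3).
  { apply div_mono. split.
    - apply sqrt_lt_R0. exact D3.
    - apply sqrt_le. lra. lra. exact D2.
    - apply Rmult_le_pos; lra. }
  eapply Rle_trans. exact E1. eapply Rle_trans. 2: exact E2.
  apply cross. apply pow_lt; lra. apply pow_lt; lra.
  replace (ri * rj * sin th * (rk + rl) ^ 3) with ((ri * rj * (rk+rl)^3) * sin th) by ring.
  replace (rk * rl * sin th * (rj - ri) ^ 3) with ((rk * rl * (rj-ri)^3) * sin th) by ring.
  apply Rmult_le_compat_r; assumption.
Qed.

Theorem lemma2p3 (r1 r2 r3 : R) :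
  0 < r1 -> r1 < r2 -> r2 < r3 ->
  r2 * (r3 - r1)^3 - r1 * (r3 + r2)^3 - r3 * (r1 + r2)^3 >= 0 ->
  forall theta : R, 0 <= theta <= PI ->
    gij r1 r3 theta <= gij r1 r2 theta /\ gij r1 r3 theta <= gij r2 r3 theta.
Proof.
  intros H1 H2 H3 H th Hth.
  assert (P1 : 0 <= r1 * (r3 + r2)^3) by (apply Rmult_le_pos; [lra| apply pow_le; lra]).
  assert (P2 : 0 <= r3 * (r1 + r2)^3) by (apply Rmult_le_pos; [lra| apply pow_le; lra]).
  split; apply step; try lra.
  - replace (r1 * r3 * (r1 + r2) ^ 3) with (r1 * (r3 * (r1 + r2) ^ 3)) by ring.
    replace (r1 * r2 * (r3 - r1) ^ 3) with (r1 * (r2 * (r3 - r1) ^ 3)) by ring.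
    apply Rmult_le_compat_l; lra.
  - replace (r1 * r3 * (r2 + r3) ^ 3) with (r3 * (r1 * (r3 + r2) ^ 3)) by ring.
    replace (r2 * r3 * (r3 - r1) ^ 3) with (r3 * (r2 * (r3 - r1) ^ 3)) by ring.
    apply Rmult_le_compat_l; lra.
Qed.
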